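(* Consider the queueing system in the context under MaxWeight with a diagonal matrix $\Delta$ with positive diagonal entries, in overload ($\rho\notin\mathcal{P}$), and let $\eta=\lim_{t\to\infty}X(t)/t$. Then $$\langle\eta,\Delta\eta\rangle=\langle\rho,\Delta\eta\rangle-\max_{S\in\mathcal{S}}\langle S,\Delta\eta\rangle.$$
   Context: Model: $Q$ queues, finite set $\mathcal{S}=\{S_1,\dots,S_N\}\subset\mathbb{R}^Q_{\ge0}$, discrete time. Arrivals $A(t)$ with $0\le A_q(t)\le\bar A_q<\infty$ and $\rho_q=\lim_{t\to\infty}\frac1t\sum_{s=0}^{t-1}A_q(s)\in(0,\infty)$. Departures $D_q(t)=\min\{S_q(t),X_q(t)\}$, $X(t+1)=X(t)+A(t)-D(t)$, $X(0)=0$, with $S(t)\in\arg\max_{S\in\mathcal{S}}\langle S,\Delta X(t)\rangle$. Stability region $\mathcal{P}=\{r\in\mathbb{R}^Q_{\ge0}: r\le\sum_n\alpha_nS_n\text{ for some }\alpha_n\ge0,\sum_n\alpha_n=1\}$. (Under these assumptions $\lim_t X(t)/t$ exists.) *)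

(* Defs.v *)
From HB Require Import structures.
From mathcomp Require Import all_boot all_order all_algebra.
From mathcomp Require Import all_classical all_reals all_analysis.
Set Implicit Arguments. Unset Strict Implicit. Unset Printing Implicit Defensive.
Import Order.TTheory GRing.Theory Num.Theory.
Local Open Scope ring_scope.

(* Weighted inner product <u, Delta v> with Delta = diag(d). *)
Definition ipD (R : realType) (Q : nat) (d u v : 'I_Q -> R) : R :=
  \sum_(q < Q) u q * (d q * v q).

Definition in_stab_region (R : realType) (Q N : nat)
    (S : 'I_N -> 'I_Q -> R) (r : 'I_Q -> R) : Prop :=
  (forall q, 0 <= r q) /\
  exists alpha : 'I_N -> R, (forall n, 0 <= alpha n) /\
    \sum_(n < N) alpha n = 1 /\
    forall q, r q <= \sum_(n < N) alpha n * S n q.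

Definition maxSD (R : realType) (Q N : nat) (S : 'I_N.+1 -> 'I_Q -> R)
    (d v : 'I_Q -> R) : R :=
  \big[Num.max/ipD d (S ord0) v]_(n < N.+1) ipD d (S n) v.

(* Main.v *)
Require Import Defs.
From HB Require Import structures.
From mathcomp Require Import all_boot all_order all_algebra.
From mathcomp Require Import all_classical all_reals all_analysis.
From mathcomp Require Import ring lra.
Import Order.TTheory GRing.Theory Num.Theory.
Local Open Scope ring_scope.
Local Open Scope classical_set_scope.
Import numFieldNormedType.Exports.

Lemma cvg_sumI (R : realType) (n : nat) (f : 'I_n -> nat -> R) (l : 'I_n -> R) :
  (forall i, f i @ \oo --> l i) ->
  (fun t => \sum_(i < n) f i t) @ \oo --> \sum_(i < n) l i.
Proof.
move=> H; apply: (cvg_big (op:=+%R) (x0:=0) (P:=xpredT)) => //.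
exact: add_continuous.
Qed.

Lemma ev_nat (P : nat -> Prop) : (\forall n \near \oo, P n) ->
  exists N, forall n, (N <= n)%N -> P n.
Proof. by case=> N _ HN; exists N. Qed.

Lemma inv_cvg0 (R : realType) : (fun t : nat => (t%:R : R)^-1) @ \oo --> 0.
Proof.
rewrite -cvg_shiftS /=.
exact: (@cvg_harmonic R).
Qed.

Lemma cesaro_ev (R : realType) (g : nat -> R) (M : R) (T : nat) :
  (forall s, (T <= s)%N -> g s = M) ->
  (fun t : nat => (\sum_(s < t) g s) / t%:R) @ \oo --> M.
Proof.
move=> HT.
set c := \sum_(s < T) (g s - M).
have Hh : (fun t : nat => c * (t%:R)^-1 + M) @ \oo --> M.
  rewrite -[X in _ --> X]add0r.
  apply: cvgD; last exact: cvg_cst.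
  rewrite -(mulr0 c); apply: cvgMr; exact: inv_cvg0.
apply: cvg_trans Hh; apply: near_eq_cvg.
near=> t.
have Tt : (T <= t)%N by near: t; apply: nbhs_infty_ge.
have t0 : (0 < t)%N by near: t; apply: nbhs_infty_ge.
have E : \sum_(s < t) g s = c + M *+ t.
  have -> : \sum_(s < t) g s = \sum_(s < t) (g s - M) + M *+ t.
    by rewrite sumrB sumr_const card_ord subrK.
  congr (_ + _).
  rewrite /c -!(big_mkord xpredT (fun s => g s - M)) (big_cat_nat _ Tt) //=.
  have -> : \sum_(T <= i < t) (g i - M) = 0.
    rewrite big_nat big1 // => s /andP[Ts _].
    by rewrite HT // subrr.
  by rewrite addr0.
have tn0 : (t%:R : R) != 0 by rewrite pnatr_eq0 -lt0n.
by rewrite E mulrDl -[M *+ t]mulr_natr mulfK.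
Unshelve. all: by end_near.
Qed.

Theorem lemma9 (R : realType) (Q N : nat)
  (S : 'I_N.+1 -> 'I_Q -> R)            (* schedule set S_1..S_{N+1} *)
  (d : 'I_Q -> R)                        (* Delta = diag(d) *)
  (A : nat -> 'I_Q -> R) (Abar : 'I_Q -> R) (rho : 'I_Q -> R)
  (X : nat -> 'I_Q -> R) (sched : nat -> 'I_N.+1) (eta : 'I_Q -> R) :
  (forall n q, 0 <= S n q) ->
  (forall q, 0 < d q) ->
  (forall t q, 0 <= A t q <= Abar q) ->
  (forall q, 0 < rho q) ->
  (forall q, (fun t : nat => (\sum_(s < t) A s q) / t%:R) @ \oo --> rho q) ->
  (forall q, X 0%N q = 0) ->
  (forall t q, X t.+1 q = X t q + A t q - Num.min (S (sched t) q) (X t q)) ->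
  (forall t n, ipD d (S n) (X t) <= ipD d (S (sched t)) (X t)) ->
  ~ in_stab_region S rho ->
  (forall q, (fun t : nat => X t q / t%:R) @ \oo --> eta q) ->
  ipD d eta eta = ipD d rho eta - maxSD S d eta.
Proof.
move=> HS Hd HA Hrho Hrhocv HX0 HXrec Hmw _ Heta.
pose Y t q := X t q / t%:R.
pose F n := ipD d (S n) eta.
pose M := maxSD S d eta.
have X0 : forall t q, 0 <= X t q.
  elim=> [|t IH] q; first by rewrite HX0.
  rewrite HXrec subr_ge0 ge_min; apply/orP; right.
  by rewrite lerDl; case/andP: (HA t q).
have eta0 : forall q, 0 <= eta q.
  move=> q; rewrite -(cvg_lim _ (Heta q)) //.
  apply: limr_ge; first by apply/cvg_ex; exists (eta q); exact: Heta.
  by apply: nearW => t; rewrite divr_ge0.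
have ipY : forall n t, ipD d (S n) (Y t) = ipD d (S n) (X t) / t%:R.
  move=> n t; rewrite /ipD /Y mulr_suml; apply: eq_bigr => q _.
  by rewrite !mulrA.
have HY : forall t n, ipD d (S n) (Y t) <= ipD d (S (sched t)) (Y t).
  by move=> t n; rewrite !ipY; apply: ler_wpM2r; [rewrite invr_ge0 ler0n|].
have cvip : forall n, (fun t => ipD d (S n) (Y t)) @ \oo --> F n.
  move=> n; rewrite /ipD /F; apply: cvg_sumI => q.
  apply: cvgMr; apply: cvgMr; exact: Heta.
have Hmax : forall n, F n <= M by move=> n; exact: le_bigmax.
have [n0 Hn0] : exists n0, F n0 = M.
  case: (@arg_maxP _ _ _ (ord0 : 'I_N.+1) xpredT F isT) => n0 _ Hn0.
  exists n0; apply/le_anti; rewrite Hmax /=.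
  apply/bigmax_leP; split; first exact: Hn0.
  by move=> i _; exact: Hn0.
have Ev1 : \forall t \near \oo, forall n, F n < M ->
    ipD d (S n) (Y t) < ipD d (S n0) (Y t).
  apply: filter_forall => n.
  case: (ltP (F n) M) => h; last first.
    by apply: nearW => t.
  have cv : (fun t => ipD d (S n) (Y t) - ipD d (S n0) (Y t)) @ \oo -->
      F n - F n0 by apply: cvgB.
  have := cvgr_lt _ cv 0; rewrite Hn0 subr_lt0 => /(_ _ h).
  by apply: filterS => t /=; rewrite subr_lt0.
have Ev2 : \forall t \near \oo, forall q, 0 < eta q ->
    forall n, S n q <= X t q.
  apply: filter_forall => q.
  case: (ltP 0 (eta q)) => h; last first.
    by apply: nearW => t.
  pose K := \sum_(n < N.+1) S n q.
  have HK : forall n, S n q <= K.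
    move=> n; rewrite /K (bigD1 n) //= lerDl; exact: sumr_ge0.
  pose c := eta q / 2.
  have c0 : 0 < c by rewrite /c divr_gt0.
  have ceta : c < eta q by rewrite /c ltr_pdivrMr // ltr_pMr // ltr1n.
  near=> t.
  have Yc : c < Y t q by near: t; apply: (cvgr_gt _ (Heta q)).
  have Kt : K / c <= t%:R by near: t; apply: nbhs_infty_ger.
  have t0 : (1 <= t)%N by near: t; apply: nbhs_infty_ge.
  have tn0 : (t%:R : R) != 0 by rewrite pnatr_eq0 -lt0n.
  have EX : X t q = Y t q * t%:R by rewrite /Y divfK.
  have EK : K / c * c = K by rewrite divfK // gt_eqF.
  move=> _ n; apply: (le_trans (HK n)); rewrite EX -EK.
  have tge0 : (0 : R) <= t%:R by [].
  move: Kt Yc EK tge0 c0; set a := K / c; set y := Y t q; set tr := (t%:R : R).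
  move=> *; nra.
have Ev : \forall t \near \oo, (forall n, F n < M ->
    ipD d (S n) (Y t) < ipD d (S n0) (Y t)) /\
    (forall q, 0 < eta q -> forall n, S n q <= X t q).
  by apply: filterS2 Ev1 Ev2 => t a b; split.
have [T HT] := ev_nat _ Ev.
pose w q := d q * eta q.
pose g s := \sum_(q < Q) w q * Num.min (S (sched s) q) (X s q).
have Hg : forall s, (T <= s)%N -> g s = M.
  move=> s Ts; have [E1 E2] := HT s Ts.
  have Hs : F (sched s) = M.
    apply/le_anti; rewrite Hmax /=.
    case: (ltP (F (sched s)) M) => // h.
    by move: (E1 _ h); rewrite ltNge HY.
  rewrite -Hs /g /F /ipD; apply: eq_bigr => q _.
  case: (ltP 0 (eta q)) => h.
    by rewrite min_l ?E2 // /w mulrC.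
  rewrite /w; have -> : eta q = 0 by apply/le_anti; rewrite h eta0.
  by rewrite !(mulr0, mul0r).
have Hf := cesaro_ev _ _ _ _ Hg.
have HDsum : forall t q, \sum_(s < t) Num.min (S (sched s) q) (X s q) =
    \sum_(s < t) A s q - X t q.
  elim=> [|t IH] q; first by rewrite !big_ord0 HX0 subr0.
  by rewrite !big_ord_recr /= IH HXrec; ring.
have Ef : (fun t : nat => (\sum_(s < t) g s) / t%:R) =
    (fun t => \sum_(q < Q) w q * ((\sum_(s < t) A s q) / t%:R - Y t q)).
  apply: funext => t; rewrite /g exchange_big /= mulr_suml.
  apply: eq_bigr => q _; rewrite -mulr_sumr HDsum /Y; ring.
rewrite Ef in Hf.
have Hf2 : (fun t => \sum_(q < Q) w q * ((\sum_(s < t) A s q) / t%:R - Y t q))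
    @ \oo --> \sum_(q < Q) w q * (rho q - eta q).
  apply: cvg_sumI => q; apply: cvgMr; apply: cvgB; [exact: Hrhocv|exact: Heta].
have EM : M = \sum_(q < Q) w q * (rho q - eta q).
  by rewrite -(cvg_lim _ Hf) // (cvg_lim _ Hf2).
rewrite -/M EM /ipD; apply/eqP; rewrite -subr_eq0 -!sumrB; apply/eqP.
by apply: big1 => q _; rewrite /w; ring.
Unshelve. all: by end_near.
Qed.
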